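(* For every recognizable language $L$, the minimal compact automaton $\mathcal A_c(L)$ is obtained, up to isomorphism, from the minimal deterministic automaton $\mathcal A(L)$ (viewed as a compact automaton with edges labelled by letters) by a finite sequence of elementary reductions.
   Context: A compact automaton $(Q,E,I,T)$ has edges $E\subseteq Q\times A^+\times Q$, initial states $I$ and terminal states $T$. It is deterministic if $|I|=1$ and the labels of the edges leaving any state begin with pairwise distinct letters. It is trim if every state lies on a path from $I$ to $T$. A state is special if it is initial or terminal, or if it has two outgoing edges whose labels begin with distinct letters. Elementary reduction: let $\mathcal A=(Q,i,T)$ be a trim deterministic compact automaton and let $q$ be a non-special state. Then $q$ has a unique outgoing edge $q\xrightarrow{v}r$, with $r\ne q$, and $q\neq i$. The elementary reduction of $\mathcal A$ at $q$ is the compact automaton with states $Q\setminus\{q\}$, initial state $i$, terminal states $T$, and edges: (i) the edges $(p,w,r')$ of $\mathcal A$ with $p,r'\neq q$; (ii) the edges $(p,uv,r)$ for every edge $(p,u,q)$ of $\mathcal A$. $\mathcal A(L)$ is the minimal deterministic automaton of $L$, whose states are the nonempty residuals $u^{-1}L=\{v\mid uv\in L\}$. $\mathcal A_c(L)$ is defined as follows: - its states are the special residuals of $L$, i.e. nonempty residuals $u^{-1}L$ such that $u=1$, or $u\in L$, or $u^{-1}L$ contains two words beginning with different letters; - its initial state is $L$; - its terminal states are the $u^{-1}L$ with $u\in L$; - its edges are the $(u^{-1}L,v,(uv)^{-1}L)$ with $v$ nonempty, where both residuals are special and no factorization $v=v'v''$ with $v',v''$ nonempty has $(uv')^{-1}L$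 special. *)

(* Defs.v *)
From mathcomp Require Import all_boot.

Set Implicit Arguments.
Unset Strict Implicit.
Unset Printing Implicit Defensive.

Section CompactAutomata.

Variable A : finType.

Definition lang := seq A -> bool.

Definition residual (u : seq A) (L : lang) : lang := fun v => L (u ++ v).

Definition recognizable (L : lang) : Prop :=
  exists (Q : finType) (d : Q -> A -> Q) (q0 : Q) (F : pred Q),
    forall w, L w = F (foldl d q0 w).

Record cauto (S : Type) := CAuto {
  cstate : S -> Prop;
  cedge  : S -> seq A -> S -> Prop;
  cinit  : S -> Prop;
  cterm  : S -> Prop }.

Section OnAutomata.
Variable S : Type.
Implicit Types (X Y Z : cauto S) (p q r : S).

Definition cauto_wf X : Prop :=
  (forall p w r, cedge X p w r -> [/\ cstate X p, cstate X r & w <> [::]]) /\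
  (forall p, cinit X p -> cstate X p) /\
  (forall p, cterm X p -> cstate X p).

Definition deterministic X : Prop :=
  (exists i, forall p, cinit X p <-> p = i) /\
  (forall p w1 r1 w2 r2, cedge X p w1 r1 -> cedge X p w2 r2 ->
     ohead w1 = ohead w2 -> w1 = w2 /\ r1 = r2).

Inductive reach X : S -> S -> Prop :=
  | reach_refl p : reach X p p
  | reach_step p w q r : cedge X p w q -> reach X q r -> reach X p r.

Definition trim X : Prop :=
  forall q, cstate X q ->
    (exists i, cinit X i /\ reach X i q) /\ (exists t, cterm X t /\ reach X q t).

Definition special X q : Prop :=
  cinit X q \/ cterm X q \/
  exists w1 r1 w2 r2, cedge X q w1 r1 /\ cedge X q w2 r2 /\ ohead w1 <> ohead w2.

(* Y is the elementary reduction of X at the non-special state q, whose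
   unique outgoing edge is q --v--> r. *)
Definition elem_reduction X q v r Y : Prop :=
  cauto_wf X /\ deterministic X /\ trim X /\
  cstate X q /\ ~ special X q /\ cedge X q v r /\
  (forall p, cstate Y p <-> cstate X p /\ p <> q) /\
  (forall p w r', cedge Y p w r' <->
      (cedge X p w r' /\ p <> q /\ r' <> q) \/
      (exists u, cedge X p u q /\ w = u ++ v /\ r' = r)) /\
  (forall p, cinit Y p <-> cinit X p) /\
  (forall p, cterm Y p <-> cterm X p).

Definition elem_red X Y : Prop := exists q v r, elem_reduction X q v r Y.

Inductive reduces : cauto S -> cauto S -> Prop :=
  | reduces_refl X : reduces X X
  | reduces_step X Y Z : elem_red X Y -> reduces Y Z -> reduces X Z.

End OnAutomata.

Definition cauto_iso (S1 S2 : Type) (X : cauto S1) (Y : cauto S2) : Prop :=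
  exists f : S1 -> S2,
    (forall p, cstate X p -> cstate Y (f p)) /\
    (forall p p', cstate X p -> cstate X p' -> f p = f p' -> p = p') /\
    (forall q, cstate Y q -> exists p, cstate X p /\ f p = q) /\
    (forall p w r, cstate X p -> cstate X r ->
        (cedge X p w r <-> cedge Y (f p) w (f r))) /\
    (forall p, cstate X p -> (cinit X p <-> cinit Y (f p))) /\
    (forall p, cstate X p -> (cterm X p <-> cterm Y (f p))).

Section Minimal.
Variable L : lang.

Definition nonempty_lang (K : lang) : Prop := exists v, K v.

Definition is_residual_state (K : lang) : Prop :=
  (exists u, K = residual u L) /\ nonempty_lang K.

Definition minDFA : cauto lang := {|
  cstate := is_residual_state;
  cedge := fun K w K' => exists u a, w = [:: a] /\
              K = residual u L /\ K' = residual (rcons u a) L /\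
              nonempty_lang K /\ nonempty_lang K';
  cinit := fun K => is_residual_state K /\ K = L;
  cterm := fun K => exists u, L u /\ K = residual u L |}.

Definition special_residual (K : lang) : Prop :=
  nonempty_lang K /\
  exists u, K = residual u L /\
    (u = [::] \/ L u \/
     exists (a b : A) (w1 w2 : seq A), a <> b /\ K (a :: w1) /\ K (b :: w2)).

Definition Ac : cauto lang := {|
  cstate := special_residual;
  cedge := fun K v K' => exists u, K = residual u L /\ K' = residual (u ++ v) L /\
              v <> [::] /\ special_residual K /\ special_residual K' /\
              (forall v' v'', v = v' ++ v'' -> v' <> [::] -> v'' <> [::] ->
                 ~ special_residual (residual (u ++ v') L));
  cinit := fun K => special_residual K /\ K = L;
  cterm := fun K => exists u, L u /\ K = residual u L |}.

End Minimal.

End CompactAutomata.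

(* Main.v *)
Require Import Defs.
From mathcomp Require Import all_boot.
From mathcomp Require Import zify.
From Stdlib Require Import Classical FunctionalExtensionality PropExtensionality.

Set Implicit Arguments.
Unset Strict Implicit.
Unset Printing Implicit Defensive.

Lemma split_cat (T : Type) (x x' u v : seq T) :
  x ++ x' = u ++ v ->
  (exists y, x = u ++ y /\ v = y ++ x') \/ (exists y, u = x ++ y /\ x' = y ++ v).
Proof.
elim: x u => [|a x IH] [|b u] /=.
- move=> ->; right; by exists [::].
- move=> ->; right; by exists (b :: u).
- move=> <-; left; by exists (a :: x).
- case=> -> /IH [[y [-> ->]]|[y [-> ->]]]; [left|right]; by exists y.
Qed.

Lemma lcp (T : eqType) (w1 w2 : seq T) : w1 <> w2 ->
  exists c x1 x2, w1 = c ++ x1 /\ w2 = c ++ x2 /\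
   (x1 = [::] \/ x2 = [::] \/
    exists b1 b2 y1 y2, x1 = b1 :: y1 /\ x2 = b2 :: y2 /\ b1 <> b2).
Proof.
elim: w1 w2 => [|a w1 IH] [|b w2] H //.
- exists [::], [::], (b::w2); split=> //; split=>//; by left.
- exists [::], (a::w1), [::]; do 2 split => //; by right; left.
- case: (eqVneq a b) => [Eab|ab].
  + rewrite -Eab in H *.
    have: w1 <> w2 by move=> E; apply: H; rewrite E.
    case/IH => c [x1 [x2 [-> [-> Hc]]]]. by exists (a::c), x1, x2.
  + exists [::], (a::w1), (b::w2); do 2 split=>//; right; right.
    exists a, b, w1, w2; split=>//; split=>//; exact/eqP.
Qed.

Lemma shortest (T : Type) (P : seq T -> Prop) (w : seq T) : w <> [::] -> P w ->
  exists w1 w2, w = w1 ++ w2 /\ w1 <> [::] /\ P w1 /\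
   (forall v1 v2, w1 = v1 ++ v2 -> v1 <> [::] -> v2 <> [::] -> ~ P v1).
Proof.
move=> Hw Pw; have [n Hs] : exists n, size w <= n by exists (size w).
elim: n w Hs Hw Pw => [|n IH] w Hs Hw Pw.
  case: w Hs Hw Pw => [_ H|//]; by case: H.
case: (classic (exists v1 v2, w = v1 ++ v2 /\ v1 <> [::] /\ v2 <> [::] /\ P v1)).
- case=> v1 [v2 [Ew [n1 [n2 P1]]]].
  have Hs1 : size v1 <= n.
    move: Hs; rewrite Ew size_cat; case: v2 n2 {Ew} => // ? ? _ /=; lia.
  case: (IH v1 Hs1 n1 P1) => w1 [w2 [E1 [h1 [h2 h3]]]].
  exists w1, (w2 ++ v2); split; [by rewrite Ew E1 catA | by split].
- move=> Hn; exists w, [::]; split; first by rewrite cats0.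
  split=>//; split=>//; move=> v1 v2 E n1 n2 P1; apply: Hn; by exists v1, v2.
Qed.

Definition Red (A : finType) (L : lang A) (S : lang A -> Prop) : cauto A (lang A) :=
  {| cstate := S;
     cedge := fun K w K' => S K /\ S K' /\ w <> [::] /\ K' = residual w K /\
        (forall w1 w2, w = w1 ++ w2 -> w1 <> [::] -> w2 <> [::] -> ~ S (residual w1 K));
     cinit := fun K => S K /\ K = L;
     cterm := fun K => exists u, L u /\ K = residual u L |}.

Lemma resid_cat (A : finType) (u v : seq A) (K : lang A) :
  residual (u ++ v) K = residual v (residual u K).
Proof. apply: functional_extensionality => x; by rewrite /residual catA. Qed.

Lemma resid_nil (A : finType) (K : lang A) : residual [::] K = K.
Proof. by apply: functional_extensionality. Qed.

Lemma res_resid (A : finType) (L K : lang A) w : is_residual_state L K ->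
  nonempty_lang (residual w K) -> is_residual_state L (residual w K).
Proof. case=> [[u ->] _] ne; split=>//; exists (u ++ w); by rewrite resid_cat. Qed.

Lemma term_special (A : finType) (L : lang A) u : L u -> special_residual L (residual u L).
Proof.
move=> Lu; split; first by exists [::]; rewrite /residual cats0.
exists u; split=>//; by right; left.
Qed.

Lemma L_special (A : finType) (L K : lang A) : is_residual_state L K -> special_residual L L.
Proof.
case=> [[u ->] [v Kv]]; split; first by exists (u ++ v).
exists [::]; rewrite resid_nil; split=>//; by left.
Qed.

Lemma branch_special (A : finType) (L K : lang A) a b w1 w2 :
  is_residual_state L K -> a <> b -> K (a :: w1) -> K (b :: w2) -> special_residual L K.
Proof.
move=> [[u ->] ne] ab h1 h2; split=>//; exists u; split=>//; right; right.
by exists a, b, w1, w2.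
Qed.

Lemma special_res (A : finType) (L K : lang A) : special_residual L K -> is_residual_state L K.
Proof. case=> ne [u [E _]]; split=>//; by exists u. Qed.

Lemma Red_wf (A : finType) (L : lang A) (S : lang A -> Prop)
  (H1 : forall K, special_residual L K -> S K) :
  cauto_wf (Red L S).
Proof.
split; first by move=> p w r [? [? [? _]]].
split; first by move=> p [].
move=> p [u [Lu ->]]; apply: H1; exact: term_special.
Qed.

Lemma Red_det_edge (A : finType) (L : lang A) (S : lang A -> Prop)
  (H1 : forall K, special_residual L K -> S K)
  (H2 : forall K, S K -> is_residual_state L K) p w1 r1 w2 r2 :
  cedge (Red L S) p w1 r1 -> cedge (Red L S) p w2 r2 -> ohead w1 = ohead w2 ->
  w1 = w2 /\ r1 = r2.
Proof.
move=> [Sp [Sr1 [n1 [E1 M1]]]] [_ [Sr2 [n2 [E2 M2]]]] Eh.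
case: (classic (w1 = w2)) => [E|Ne]; first by split=>//; rewrite E1 E2 E.
exfalso. case: (lcp Ne) => c [x1 [x2 [Ew1 [Ew2 Hc]]]].
subst w1 w2.
have cn : c <> [::].
  move=> c0; subst c; move: Hc Eh n1 n2 Ne => /=.
  by case=> [->|[->|[b1 [b2 [y1 [y2 [-> [-> bb]]]]]]]] //= [].
case: Hc => [x10|[x20|[b1 [b2 [y1 [y2 [ex1 [ex2 bb]]]]]]]].
- subst x1. have x2n : x2 <> [::] by move=> x20; apply: Ne; rewrite x20.
  apply: (M2 c x2 erefl cn x2n). by rewrite -(cats0 c) -E1.
- subst x2. have x1n : x1 <> [::] by move=> x10; apply: Ne; rewrite x10.
  apply: (M1 c x1 erefl cn x1n). by rewrite -(cats0 c) -E2.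
- subst x1 x2.
  have [v1 Hv1] : nonempty_lang r1 by case: (H2 _ Sr1).
  have [v2 Hv2] : nonempty_lang r2 by case: (H2 _ Sr2).
  apply: (M1 c (b1 :: y1) erefl cn) => //; apply: H1.
  rewrite E1 /residual in Hv1; rewrite E2 /residual in Hv2.
  apply: (@branch_special _ L _ b1 b2 (y1 ++ v1) (y2 ++ v2)) => //.
  + apply: res_resid; first exact: H2.
    exists (b1 :: y1 ++ v1); rewrite /residual; by move: Hv1; rewrite -catA.
  + rewrite /residual; by move: Hv1; rewrite -catA.
  + rewrite /residual; by move: Hv2; rewrite -catA.
Qed.

Lemma Red_det (A : finType) (L : lang A) (S : lang A -> Prop)
  (H1 : forall K, special_residual L K -> S K)
  (H2 : forall K, S K -> is_residual_state L K) K0 :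
  S K0 -> deterministic (Red L S).
Proof.
move=> SK0; split; last exact: Red_det_edge.
exists L => p /=; split; first by case.
move=> ->; split=>//; apply: H1; exact: L_special (H2 _ SK0).
Qed.

Lemma Red_reach (A : finType) (L : lang A) (S : lang A -> Prop) K w :
  S K -> S (residual w K) -> reach (Red L S) K (residual w K).
Proof.
have [n Hs] : exists n, size w <= n by exists (size w).
elim: n w K Hs => [|n IH] w K Hs SK Sw.
  by case: w Hs Sw => // _ _; rewrite resid_nil; apply: reach_refl.
case: (classic (w = [::])) => [->|wn]; first by rewrite resid_nil; apply: reach_refl.
case: (@shortest _ (fun x => S (residual x K)) w wn Sw) => w1 [w2 [Ew [n1 [P1 M1]]]].
apply: (@reach_step _ _ _ _ w1 (residual w1 K)).
  by split=>//; split=>//; split=>//; split.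
rewrite Ew resid_cat; apply: IH => //; last by rewrite -resid_cat -Ew.
move: Hs; rewrite Ew size_cat; case: w1 n1 {Ew P1 M1} => // ? ? _ /=; lia.
Qed.

Lemma Red_trim (A : finType) (L : lang A) (S : lang A -> Prop)
  (H1 : forall K, special_residual L K -> S K)
  (H2 : forall K, S K -> is_residual_state L K) :
  trim (Red L S).
Proof.
move=> K SK; split.
- exists L. case: (H2 _ SK) => [[u EK] _].
  have SL : S L by apply: H1; exact: L_special (H2 _ SK).
  split; first by split.
  rewrite EK; apply: Red_reach => //; by rewrite -EK.
- case: (H2 _ SK) => [[u EK] [v Kv]]. exists (residual v K); split.
    exists (u ++ v); split; [by move: Kv; rewrite EK | by rewrite EK resid_cat].
  apply: Red_reach => //. apply: H1. rewrite EK -resid_cat; apply: term_special.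
  by move: Kv; rewrite EK.
Qed.

Lemma Red_nonspecial (A : finType) (L : lang A) (S : lang A -> Prop)
  (H2 : forall K, S K -> is_residual_state L K) q :
  S q -> ~ special_residual L q -> ~ special (Red L S) q.
Proof.
move=> Sq nsq [[_ Eq]|[[u [Lu Eq]]|[w1 [r1 [w2 [r2 [e1 [e2 Eh]]]]]]]].
- apply: nsq; rewrite Eq; exact: L_special (H2 _ Sq).
- apply: nsq; rewrite Eq; exact: term_special.
- case: e1 => [_ [Sr1 [n1 [E1 _]]]]; case: e2 => [_ [Sr2 [n2 [E2 _]]]].
  have [v1 Hv1] : nonempty_lang r1 by case: (H2 _ Sr1).
  have [v2 Hv2] : nonempty_lang r2 by case: (H2 _ Sr2).
  rewrite E1 /residual in Hv1; rewrite E2 /residual in Hv2.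
  case: w1 n1 Eh Hv1 {E1} => [[]//|a t1] _; case: w2 n2 Hv2 {E2} => [[]//|b t2] _ Hv2 /= Eh Hv1.
  apply: nsq; apply: (@branch_special _ L _ a b (t1 ++ v1) (t2 ++ v2)) => //.
  + exact: H2.
  + by move=> ab; apply: Eh; rewrite ab.
Qed.

Lemma Red_out_exists (A : finType) (L : lang A) (S : lang A -> Prop)
  (H1 : forall K, special_residual L K -> S K)
  (H2 : forall K, S K -> is_residual_state L K) q :
  S q -> ~ special_residual L q -> exists v r, cedge (Red L S) q v r.
Proof.
move=> Sq nsq; case: (H2 _ Sq) => [[u Eq] [v qv]].
have Sv : S (residual v q).
  apply: H1; rewrite Eq -resid_cat; apply: term_special; by move: qv; rewrite Eq.
have vn : v <> [::].
  move=> v0; subst v; apply: nsq; rewrite Eq; apply: term_special.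
  by move: qv; rewrite Eq /residual cats0.
case: (@shortest _ (fun x => S (residual x q)) v vn Sv) => w1 [w2 [Ew [n1 [P1 M1]]]].
exists w1, (residual w1 q); by split=>//; split=>//; split=>//; split.
Qed.

Lemma Red_out_uniq (A : finType) (L : lang A) (S : lang A -> Prop)
  (H1 : forall K, special_residual L K -> S K)
  (H2 : forall K, S K -> is_residual_state L K) q v r w r' :
  S q -> ~ special_residual L q ->
  cedge (Red L S) q v r -> cedge (Red L S) q w r' -> w = v /\ r' = r.
Proof.
move=> Sq nsq e1 e2.
case: (classic (ohead w = ohead v)) => Eh; first exact: (Red_det_edge H1 H2 e2 e1).
exfalso; apply: (Red_nonspecial H2 Sq nsq); right; right.
by exists w, r', v, r.
Qed.

Lemma Red_out_noloop (A : finType) (L : lang A) (S : lang A -> Prop)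
  (H1 : forall K, special_residual L K -> S K)
  (H2 : forall K, S K -> is_residual_state L K) q v r :
  S q -> ~ special_residual L q -> cedge (Red L S) q v r -> r <> q.
Proof.
move=> Sq nsq e rq; subst r.
have key : forall x t, reach (Red L S) x t -> x = q -> t = q.
  move=> x t; elim=> // p w q' t' e' _ IH pq; subst p.
  case: (Red_out_uniq H1 H2 Sq nsq e e') => _ E; exact: IH E.
case: (Red_trim H1 H2 Sq) => _ [t [[u [Lu Et]] rt]].
have tq := key _ _ rt erefl.
apply: nsq; rewrite -tq Et; exact: term_special.
Qed.

Lemma cat_nonnil_l (T : Type) (s1 s2 : seq T) : s1 <> [::] -> s1 ++ s2 <> [::].
Proof. by case: s1. Qed.

Lemma cat_nonnil_r (T : Type) (s1 s2 : seq T) : s2 <> [::] -> s1 ++ s2 <> [::].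
Proof. by case: s1. Qed.

Lemma Red_step (A : finType) (L : lang A) (S : lang A -> Prop)
  (H1 : forall K, special_residual L K -> S K)
  (H2 : forall K, S K -> is_residual_state L K) q :
  S q -> ~ special_residual L q ->
  exists v r, elem_reduction (Red L S) q v r (Red L (fun K => S K /\ K <> q)).
Proof.
move=> Sq nsq.
case: (Red_out_exists H1 H2 Sq nsq) => v [r e].
have rq := Red_out_noloop H1 H2 Sq nsq e.
have qL : q <> L by move=> E; apply: nsq; rewrite E; exact: L_special (H2 _ Sq).
exists v, r.
split; first exact: Red_wf.
split; first exact: (Red_det H1 H2 Sq).
split; first exact: Red_trim.
split; first done.
split; first exact: Red_nonspecial.
split; first done.
split; first by move=> p; exact: iff_refl.
split; last first.
  split; last by move=> p; exact: iff_refl.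
  move=> p /=; split; first by move=> [[Sp _] Ep]; split.
  case=> Sp Ep; split=>//; split=>//; by rewrite Ep => E; apply: qL.
move=> p w r'; split.
- case=> [[Sp pq] [[Sr' r'q] [wn [Er' M]]]].
  case: (classic (exists w1 w2, w = w1 ++ w2 /\ w1 <> [::] /\ w2 <> [::] /\
                                residual w1 p = q)) => [[w1 [w2 [Ew [n1 [n2 Hq]]]]]|Hn].
  + right.
    case: (@shortest _ (fun x => residual x p = q) w1 n1 Hq) => x1 [x2 [E1 [nx1 [Px1 Mx1]]]].
    have e1 : cedge (Red L S) p x1 q.
      split=>//; split=>//; split=>//; split; first by rewrite Px1.
      move=> y1 y2 Ey n1' n2' Sy.
      case: (classic (residual y1 p = q)) => Hy; first exact: (Mx1 y1 y2 Ey n1' n2' Hy).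
      apply: (M y1 (y2 ++ x2 ++ w2)) => //.
      * by rewrite Ew E1 Ey !catA.
      * exact: cat_nonnil_l.
    have [rest Erest] : exists rest, rest = x2 ++ w2 by exists (x2 ++ w2).
    have Ew' : w = x1 ++ rest by rewrite Ew E1 Erest catA.
    have restn : rest <> [::] by rewrite Erest; exact: cat_nonnil_r.
    have Srest : S (residual rest q) by rewrite -Px1 -resid_cat -Ew' -Er'.
    case: (@shortest _ (fun y => S (residual y q)) rest restn Srest)
      => y1 [y2 [Er [ny1 [Py1 My1]]]].
    have e2 : cedge (Red L S) q y1 (residual y1 q) by split=>//; split=>//; split=>//; split.
    case: (Red_out_uniq H1 H2 Sq nsq e e2) => Ey1 Ery1.
    case: (classic (y2 = [::])) => [y20|y2n].
    * exists x1; split; first exact e1.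
      split; first by rewrite Ew' Er y20 cats0 Ey1.
      by rewrite Er' Ew' resid_cat Px1 Er y20 cats0 Ery1.
    * exfalso. apply: (M (x1 ++ y1) y2) => //.
      -- by rewrite Ew' Er catA.
      -- exact: cat_nonnil_l.
      -- rewrite resid_cat Px1 Ery1; split=>//; by case: e => _ [].
  + left. split=>//. split=>//; split=>//; split=>//; split=>//.
    move=> w1 w2 Ew n1 n2 Sw1. case: (classic (residual w1 p = q)) => Hq.
      apply: Hn; by exists w1, w2.
    exact: (M w1 w2 Ew n1 n2 (conj Sw1 Hq)).
- case=> [[[Sp [Sr' [wn [Er' M]]]] [pq r'q]]|[u [eu [Ew Er]]]].
  + split; first by split. split; first by split. split=>//; split=>//.
    move=> w1 w2 Ew n1 n2 [Sw1 _]; exact: (M w1 w2 Ew n1 n2 Sw1).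
  + have pq : p <> q.
      move=> pq; subst p. case: (Red_out_uniq H1 H2 Sq nsq e eu) => _ Eq.
      by apply: rq; rewrite Eq.
    case: eu => [Sp [_ [un [Equ Mu]]]]; case: (e) => [_ [Sr [vn [Erv Mv]]]].
    subst w r'.
    split; first by split. split; first by split.
    split; first exact: cat_nonnil_l.
    split; first by rewrite resid_cat -Equ.
    move=> w1 w2 Ew n1 n2 [Sw1 w1q].
    case: (split_cat (esym Ew)) => [[y [Ey Evy]]|[y [Euy Ew2]]].
    * case: (classic (y = [::])) => [y0|yn].
        apply: w1q; by rewrite Ey y0 cats0 Equ.
      apply: (Mv y w2 Evy yn n2). by rewrite Equ -resid_cat -Ey.
    * case: (classic (y = [::])) => [y0|yn].
        apply: w1q; by rewrite Equ Euy y0 cats0.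
      exact: (Mu w1 y Euy n1 yn Sw1).
Qed.

Definition Sl (A : finType) (L : lang A) (T : eqType) (g : T -> lang A) (l : seq T)
  : lang A -> Prop :=
  fun K => special_residual L K \/ (is_residual_state L K /\ exists s, s \in l /\ K = g s).

Lemma pred_ext (A : finType) (P Q : lang A -> Prop) : (forall K, P K <-> Q K) -> P = Q.
Proof.
move=> H; apply: functional_extensionality => K; apply: propositional_extensionality; exact: H.
Qed.

Lemma reduce_list (A : finType) (L : lang A) (T : eqType) (g : T -> lang A) (l : seq T) :
  reduces (Red L (Sl L g l)) (Red L (Sl L g [::])).
Proof.
elim: l => [|x l IH]; first exact: reduces_refl.
case: (classic (special_residual L (g x) \/ ~ is_residual_state L (g x) \/
                exists s, s \in l /\ g x = g s)) => Hx.
- suff -> : Sl L g (x :: l) = Sl L g l by [].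
  apply: pred_ext => K; rewrite /Sl; split.
  + case=> [sp|[rK [s [sin EK]]]]; first by left.
    move: sin; rewrite in_cons => /orP [/eqP Es|sin]; last by right; split=>//; exists s.
    subst s K.
    case: Hx => [sp|[nr|[s' [s'in E]]]]; first by left.
      by exfalso; exact: nr rK.
    right; split=>//; by exists s'.
  + case=> [sp|[rK [s [sin EK]]]]; first by left.
    subst K; right; split=>//; exists s; split=>//; by rewrite in_cons sin orbT.
- have nsx : ~ special_residual L (g x) by move=> h; apply: Hx; left.
  have rx : is_residual_state L (g x) by apply: NNPP => h; apply: Hx; right; left.
  have nix : ~ exists s, s \in l /\ g x = g s by move=> h; apply: Hx; right; right.
  have H1 : forall K, special_residual L K -> Sl L g (x :: l) K by move=> K h; left.
  have H2 : forall K, Sl L g (x::l) K -> is_residual_state L K.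
    move=> K [h|[h _]] //; exact: special_res.
  have Sx : Sl L g (x :: l) (g x) by rewrite /Sl; right; split=>//; exists x; split=>//; rewrite mem_head.
  case: (Red_step H1 H2 Sx nsx) => v [r Hred].
  apply: reduces_step IH; exists (g x), v, r.
  suff <- : (fun K => Sl L g (x :: l) K /\ K <> g x) = Sl L g l by [].
  apply: pred_ext => K; split.
  + case=> [[sp|[rK [s [sin EK]]]] Kx]; first by left.
    move: sin; rewrite in_cons => /orP [/eqP Es|sin].
      by subst s; exfalso; exact: Kx EK.
    right; split=>//; by exists s.
  + case=> [sp|[rK [s [sin EK]]]].
      split; first by left. by move=> E; apply: nsx; rewrite -E.
    split; first by right; split=>//; exists s; split=>//; rewrite in_cons sin orbT.
    move=> E; apply: nix; exists s; split=>//; by rewrite -E.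
Qed.

Theorem mainTheorem13 (A : finType) (L : lang A) :
  recognizable L ->
  exists B : cauto A (lang A),
    reduces (minDFA L) B /\ cauto_iso B (Ac L).
Proof.
case=> Q [d [q0 [F HL]]].
pose g := fun s : Q => ((fun v : seq A => F (foldl d s v)) : lang A).
exists (Red L (special_residual L)); split.
- have E1 : minDFA L = Red L (is_residual_state L).
    rewrite /minDFA /Red; f_equal.
    apply: functional_extensionality => K; apply: functional_extensionality => w.
    apply: functional_extensionality => K'; apply: propositional_extensionality; split.
    + case=> u [a [-> [EK [EK' [neK neK']]]]].
      split; first by split=>//; exists u.
      split; first by split=>//; exists (rcons u a).
      split=>//. split; first by rewrite EK EK' -cats1 resid_cat.
      move=> w1 w2 E n1 n2; have := congr1 size E; rewrite size_cat /=.
      case: w1 n1 {E} => [[]//|? ?] _; case: w2 n2 => [[]//|? ?] _ /=; lia.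
    + case=> rK [rK' [wn [EK' M]]]. case: w wn EK' M => [[]//|a t] _ EK' M.
      case: (rK) => [[u EK] neK].
      have t0 : t = [::].
        apply: NNPP => tn. apply: (M [:: a] t erefl) => //.
        apply: res_resid => //. case: (rK') => _ [v Kv]. exists (t ++ v).
        rewrite EK' /residual in Kv; exact: Kv.
      subst t. exists u, a; split=>//; split=>//; split.
        by rewrite EK' EK -cats1 resid_cat.
      split=>//; by case: rK'.
  have E2 : Sl L g (enum Q) = is_residual_state L.
    apply: pred_ext => K; split.
      case=> [sp|[rK _]]; [exact: special_res| exact rK].
    move=> rK; right; split=>//. case: (rK) => [[u EK] _].
    exists (foldl d q0 u); split; first by rewrite mem_enum.
    rewrite EK; apply: functional_extensionality => v.
    by rewrite /residual HL foldl_cat /g.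
  have E3 : Sl L g [::] = special_residual L.
    apply: pred_ext => K; split; last by left.
    case=> [//|[_ [s [sin _]]]]; by rewrite in_nil in sin.
  rewrite E1 -E2 -E3; exact: reduce_list.
- exists id; split; first by move=> p.
  split; first by move=> p p' _ _.
  split; first by move=> q sq; exists q; split.
  split; last by split; move=> p _; exact: iff_refl.
  move=> p w r sp sr /=; split.
  + case=> _ [_ [wn [Er M]]]. case: (sp) => _ [u [Ep _]].
    exists u; split=>//. split; first by rewrite Er Ep resid_cat.
    split=>//; split=>//; split=>//.
    move=> v' v'' E n1 n2; rewrite resid_cat -Ep; exact: M E n1 n2.
  + case=> u [Ep [Er [wn [_ [_ M]]]]].
    split=>//; split=>//; split=>//; split; first by rewrite Er Ep resid_cat.
    move=> w1 w2 E n1 n2; rewrite Ep -resid_cat; exact: M E n1 n2.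
Qed.
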